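(* Let $\mathcal{S}=\{(x_i,y_i)\}_{i=1}^N$ be a training set, $K$ a continuous, real-valued, symmetric, shift-invariant positive definite kernel on $\mathbb{R}^d$ with RKHS $\mathcal{H}$ and spectral probability measure $\mathbb{P}(\omega)$, $\lambda>0$, $L(u,y)$ a loss convex in $u$ with $|L'(u,y)|<M$ (derivative in the first argument), $L$ and $L'$ $\mathcal{L}$-Lipschitz in the first argument, $K(x,x')\le\kappa$ for all $x,x'$, and $|\phi_\omega(x)\phi_\omega(x')|\le\phi$ for all $\omega,b,x,x'$. Let $f_t,h_t$ be the sequences defined in the context with constant step size $\gamma$ satisfying $\frac{1}{\lambda}>\gamma>0$. Then for any $x$, $$\mathbb{E}\big[|f_{t+1}(x)-h_{t+1}(x)|^2\big]\le C^2,\qquad C^2:=M^2(\sqrt{\kappa}+\sqrt{\phi})^2\gamma/\lambda.$$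
   Context: Random feature map: $\phi_\omega(x)=\sqrt{2}\cos(\omega^Tx+b)$ with $\omega\sim\mathbb{P}(\omega)$, $b\sim U[0,2\pi]$, so that $K(x,x')=\mathbb{E}_{\omega,b}[\phi_\omega(x)\phi_\omega(x')]$. Iterations: $f_1=h_1=0$; at iteration $t$ draw $(x_t,y_t)$ uniformly from $\mathcal{S}$ and $(\omega_t,b_t)$ independently, and set $f_{t+1}=f_t-\gamma\big(L'(f_t(x_t),y_t)\phi_{\omega_t}(x_t)\phi_{\omega_t}(\cdot)+\lambda f_t\big)$ and $h_{t+1}=h_t-\gamma\big(L'(f_t(x_t),y_t)K(x_t,\cdot)+\lambda h_t\big)$. The expectation is over all sampled data points and random features up to iteration $t$. *)

(* Defs.v *)
From HB Require Import structures.
From mathcomp Require Import all_boot all_order all_algebra.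
From mathcomp Require Import all_classical all_reals all_analysis.
Set Implicit Arguments. Unset Strict Implicit. Unset Printing Implicit Defensive.
Import Order.TTheory GRing.Theory Num.Theory.
Import numFieldNormedType.Exports.
Local Open Scope classical_set_scope.
Local Open Scope ring_scope.

Section RandomFeatures.
Variables (R : realType) (d N : nat).

(* points x of R^d are row vectors; frequencies omega are d-tuples
   (d.-tuple R carries the product Borel sigma-algebra in mathcomp-analysis) *)
Definition dotp (w : d.-tuple R) (x : 'rV[R]_d) : R :=
  \sum_(k < d) tnth w k * x ord0 k.

Definition rff (w : d.-tuple R) (b : R) (x : 'rV[R]_d) : R :=
  Num.sqrt 2 * cos (dotp w x + b).

(* one random draw at an iteration: data index, omega, b *)
Definition sample := ('I_N * (d.-tuple R * R))%type.

Variables (xs : 'I_N -> 'rV[R]_d) (ys : 'I_N -> R)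
  (dL : R -> R -> R) (K : 'rV[R]_d -> 'rV[R]_d -> R) (gamma lambda : R).

Definition step (fh : ('rV[R]_d -> R) * ('rV[R]_d -> R)) (z : sample)
  : ('rV[R]_d -> R) * ('rV[R]_d -> R) :=
  let: (f, h) := fh in
  let: (i, (w, b)) := z in
  let g := dL (f (xs i)) (ys i) in
  (fun x => f x - gamma * (g * rff w b (xs i) * rff w b x + lambda * f x),
   fun x => h x - gamma * (g * K (xs i) x + lambda * h x)).

(* iterates s = (f_{t+1}, h_{t+1}) where s = [:: z_1; ...; z_t] is the
   chronological list of draws; iterates [::] = (f_1, h_1) = (0, 0) *)
Definition iterates (s : seq sample) : ('rV[R]_d -> R) * ('rV[R]_d -> R) :=
  foldl step (fun _ => 0, fun _ => 0) s.

End RandomFeatures.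

Section Expectation.
Local Open Scope ereal_scope.
Variables (R : realType) (d N : nat) (P : probability (d.-tuple R) R).

Definition Eunif (g : R -> \bar R) : \bar R :=
  ((2 * pi)^-1)%:E * \int[lebesgue_measure]_(b in `[0%R, (2 * pi)%R]) g b.

(* Expectation of F over t i.i.d. draws (i_j, omega_j, b_j), j = 1..t, with
   i_j uniform on {1..N}, omega_j ~ P, b_j ~ U[0,2pi], all independent:
   the iterated integral of the product measure (first draw outermost). *)
Fixpoint Eiter (t : nat) (F : seq (sample R d N) -> \bar R) : \bar R :=
  if t is t'.+1 then
    (N%:R^-1)%:E * \sum_(i < N)
      \int[P]_w Eunif (fun b => Eiter t' (fun s => F ((i, (w, b)) :: s)))
  else F [::].

End Expectation.

(* Main.v *)
Require Import Defs.
From HB Require Import structures.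
From mathcomp Require Import all_boot all_order all_algebra.
From mathcomp Require Import all_classical all_reals all_analysis.
From mathcomp Require Import ring lra.
Import Order.TTheory GRing.Theory Num.Theory.
Import numFieldNormedType.Exports.
Local Open Scope classical_set_scope.
Local Open Scope ring_scope.

Set Implicit Arguments. Unset Strict Implicit. Unset Printing Implicit Defensive.

Section S2.
Variables (R : realType) (d : nat) (P : probability (d.-tuple R) R).

Lemma mdotp (a : 'rV[R]_d) : measurable_fun [set: d.-tuple R] (fun w => dotp w a).
Proof.
rewrite /dotp; apply: measurable_sum => k.
by apply: measurable_realfun.measurable_funM; [exact: measurable_tnth | exact: measurable_cst].
Qed.

Lemma mcos_dotp (a a' : 'rV[R]_d) :
  measurable_fun [set: d.-tuple R] (fun w => cos (dotp w a - dotp w a')).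
Proof.
apply: (@measurableT_comp _ _ _ _ _ _ (@cos R)); first by apply: measurable_realfun.continuous_measurable_fun; exact: continuous_cos.
by apply: measurable_realfun.measurable_funB; exact: mdotp.
Qed.

Lemma intP_lin (A B k : R) (a a' : 'rV[R]_d) :
  k%:E = (\int[P]_w (cos (dotp w a - dotp w a'))%:E)%E ->
  (\int[P]_w (A + B * cos (dotp w a - dotp w a'))%:E)%E = (A + B * k)%:E.
Proof.
move=> hk.
have ic : P.-integrable setT (EFin \o (fun w => cos (dotp w a - dotp w a'))).
  apply: measurable_bounded_integrable => //.
  - by apply: (le_lt_trans (probability_le1 P measurableT)); rewrite ltry.
  - exact: mcos_dotp.
  - exists 1; split => // z z1 w _; rewrite /=. apply: (le_trans (cos_max _)); apply: ltW; by rewrite (le_lt_trans _ z1) // ler_norm.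
under eq_integral do rewrite EFinD EFinM.
rewrite integralD //; last 2 first.
- exact: finite_measure_integrable_cst.
- by apply: integrableZl.
have e1 : (A%:E * P [set: d.-tuple R])%E = A%:E by rewrite probability_setT mule1.
rewrite integral_cst // e1 integralZl // -hk.
by rewrite -EFinM -EFinD.
Qed.
Lemma int_coscos (u v : R) :
  (\int[lebesgue_measure]_(b in `[0%R, (2 * pi)%R]) (2 * (cos (u + b) * cos (v + b)))%:E)%E
  = ((2 * pi) * cos (u - v))%:E.
Proof.
pose F : R -> R := (fun b => b * cos (u - v)) + (cst (sin u) * cos + cst (cos u) * sin) * (cst (cos v) * cos - cst (sin v) * sin).
have dF : forall b : R, is_derive b 1 F (cos (u - v) + ((sin u * cos b + cos u * sin b) * (cos v * - sin b - sin v * cos b) + (cos v * cos b - sin v * sin b) * (sin u * - sin b + cos u * cos b))).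
  move=> b; rewrite /F.
  apply: is_derive_eq.
  by rewrite /= !scaler0 !addr0 /GRing.scale /= add0r mulr1.
have cF : continuous F.
  by move=> b; apply: differentiable_continuous; apply/derivable1_diffP; have [] := dF b.
have pi2 : (0 < 2 * pi :> R) by rewrite mulr_gt0 // pi_gt0.
rewrite (@continuous_FTC2 _ _ F) //.
- rewrite /F -EFinB; congr EFin; rewrite !fctE /= mulr_natl cos2pi sin2pi cos0 sin0; ring.
- apply: continuous_subspaceT => b.
  apply: cvgM; first exact: cvg_cst.
  by apply: cvgM; (apply: continuous_comp; [apply: cvgD; [exact: cvg_cst|exact: cvg_id]| exact: continuous_cos]).
- split.
  + by move=> b _; have [] := dF b.
  + exact: cvg_at_right_filter (cF 0).
  + exact: cvg_at_left_filter (cF _).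
- move=> b _; rewrite derive1E (@derive_val _ _ _ _ _ _ _ (dF b)).
  rewrite !cosD cosN sinN.
  have h := cos2Dsin2 b.
  transitivity ((cos u * cos v - sin u * - sin v) * (cos b ^+ 2 + sin b ^+ 2) + ((sin u * cos b + cos u * sin b) * (cos v * - sin b - sin v * cos b) + (cos v * cos b - sin v * sin b) * (sin u * - sin b + cos u * cos b))).
    by rewrite h mulr1.
  ring.
Qed.

Definition I02 : set R := `[0%R, (2 * pi)%R].

Lemma crff (w : d.-tuple R) (a : 'rV[R]_d) : continuous (fun b => rff w b a).
Proof.
move=> b; rewrite /rff; apply: cvgM; first exact: cvg_cst.
by apply: continuous_comp; [apply: cvgD; [exact: cvg_cst|exact: cvg_id]| exact: continuous_cos].
Qed.

Lemma iP1 (w : d.-tuple R) (a a' : 'rV[R]_d) :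
  lebesgue_measure.-integrable I02 (fun b => (rff w b a * rff w b a')%:E).
Proof.
apply: (@continuous_compact_integrable R (fun b => rff w b a * rff w b a')).
  exact: segment_compact.
apply: continuous_subspaceT => b.
by apply: cvgM; apply: crff.
Qed.

Lemma int_rff (w : d.-tuple R) (a a' : 'rV[R]_d) :
  (\int[lebesgue_measure]_(b in I02) (rff w b a * rff w b a')%:E)%E
  = ((2 * pi) * cos (dotp w a - dotp w a'))%:E.
Proof.
rewrite -int_coscos; apply: eq_integral => b _; congr EFin.
rewrite /rff mulrACA -expr2 sqr_sqrtr //.
Qed.

Lemma Eunif_rff (w : d.-tuple R) (a a' : 'rV[R]_d) :
  Eunif (fun b => (rff w b a * rff w b a')%:E) = (cos (dotp w a - dotp w a'))%:E.
Proof.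
have pi2 : (0 < 2 * pi :> R) by rewrite mulr_gt0 // pi_gt0.
rewrite /Eunif -/I02 int_rff -EFinM mulrA mulVf ?mul1r //.
by rewrite gt_eqF.
Qed.

Lemma mI02 : measurable I02.
Proof. exact: measurable_itv. Qed.
Hint Resolve mI02 : core.

Lemma pi2_gt0 : (0 < 2 * pi :> R).
Proof. by rewrite mulr_gt0 // pi_gt0. Qed.

Lemma leb_I02 : lebesgue_measure I02 = (2 * pi)%:E.
Proof.
by rewrite /I02 lebesgue_measure_itv /= lte_fin pi2_gt0 -EFinB subr0.
Qed.

Lemma icst (A : R) : lebesgue_measure.-integrable I02 (fun b : R => A%:E).
Proof.
apply: (@continuous_compact_integrable R (fun b => A)).
  exact: segment_compact.
by apply: continuous_subspaceT => b; exact: cvg_cst.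
Qed.

Lemma Eunif_lin3 (w : d.-tuple R) (a x : 'rV[R]_d) (A B C : R) :
  Eunif (fun b => (A + B * (rff w b a * rff w b x) + C * (rff w b x * rff w b x))%:E)
  = (A + B * cos (dotp w a - dotp w x) + C)%:E.
Proof.
rewrite /Eunif -/I02.
have -> : (fun b => (A + B * (rff w b a * rff w b x) + C * (rff w b x * rff w b x))%:E) =
  (fun b => A%:E + (B%:E * (rff w b a * rff w b x)%:E) + (C%:E * (rff w b x * rff w b x)%:E))%E.
  by apply/funext => b; rewrite -!EFinM -!EFinD.
rewrite integralD //; last 2 first.
- apply: integrableD => //; first exact: icst.
  by apply: integrableZl => //; exact: iP1.
- by apply: integrableZl => //; exact: iP1.
rewrite integralD //; last 2 first.
- exact: icst.
- by apply: integrableZl => //; exact: iP1.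
rewrite !integralZl //; try exact: iP1.
have e2 : (A%:E * lebesgue_measure I02)%E = (A * (2 * pi))%:E by rewrite leb_I02.
rewrite !int_rff integral_cst // e2 subrr cos0.
apply: (@eq_trans _ _ ((2 * pi)^-1 * (A * (2 * pi) + B * (2 * pi * cos (dotp w a - dotp w x)) + C * (2 * pi * 1)))%:E); first by [].
congr EFin.
move: (pi_gt0 R); set p := (pi : R) => hp; clearbody p. by field; rewrite gt_eqF.
Qed.

Lemma ge0_le_int_nm (d' : measure_display) (T : measurableType d') (mu : measure T R)
  (D : set T) (f g : T -> \bar R) :
  (forall x, D x -> (0 <= f x)%E) -> (forall x, D x -> (f x <= g x)%E) ->
  (\int[mu]_(x in D) f x <= \int[mu]_(x in D) g x)%E.
Proof.
move=> f0 fg; rewrite !ge0_integralE //; last first.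
  by move=> x Dx; exact: le_trans (f0 x Dx) (fg x Dx).
apply: le_ereal_sup => _ [h hf <-]; exists h => //= t.
apply: le_trans (hf t) _; rewrite /patch; case: ifPn => // /set_mem Dt.
exact: fg.
Qed.

Lemma Eunif_le (f g : R -> \bar R) :
  (forall b, I02 b -> (0 <= f b)%E) -> (forall b, I02 b -> (f b <= g b)%E) ->
  (Eunif f <= Eunif g)%E.
Proof.
move=> f0 fg; rewrite /Eunif; apply: lee_wpmul2l.
  by rewrite lee_fin invr_ge0 ltW // pi2_gt0.
exact: ge0_le_int_nm.
Qed.

Lemma Eunif_ge0 (f : R -> \bar R) : (forall b, I02 b -> (0 <= f b)%E) -> (0 <= Eunif f)%E.
Proof.
move=> f0; rewrite /Eunif; apply: mule_ge0.
  by rewrite lee_fin invr_ge0 ltW // pi2_gt0.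
exact: integral_ge0.
Qed.

Lemma rff_sq_le2 (w : d.-tuple R) (b : R) (a : 'rV[R]_d) : rff w b a ^+ 2 <= 2.
Proof.
rewrite /rff exprMn sqr_sqrtr // ler_piMr //.
Qed.

Lemma one_step (q r al be k : R) (a x : 'rV[R]_d) : 0 <= q -> 0 <= r ->
  k%:E = (\int[P]_w Eunif (fun b => (rff w b a * rff w b x)%:E))%E ->
  (\int[P]_w Eunif (fun b => (q * (al + be * (rff w b a * rff w b x - k)) ^+ 2 + r)%:E)
   <= (q * (al ^+ 2 + 2 * be ^+ 2) + r)%:E)%E.
Proof.
move=> q0 r0 hk.
have hk' : k%:E = (\int[P]_w (cos (dotp w a - dotp w x))%:E)%E.
  by rewrite hk; apply: eq_integral => w _; rewrite Eunif_rff.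
pose A := q * (al ^+ 2 - 2 * al * be * k + be ^+ 2 * k ^+ 2) + r.
pose B := q * (2 * al * be - 2 * be ^+ 2 * k).
pose C := 2 * q * be ^+ 2.
apply: (@le_trans _ _ (\int[P]_w ((A + C) + B * cos (dotp w a - dotp w x))%:E)%E).
  apply: ge0_le_int_nm => w _.
    by apply: Eunif_ge0 => b _; rewrite lee_fin addr_ge0 // mulr_ge0 // sqr_ge0.
  rewrite (_ : (A + C + B * cos (dotp w a - dotp w x)) = A + B * cos (dotp w a - dotp w x) + C);
    last by ring.
  rewrite -Eunif_lin3; apply: Eunif_le => b _.
    by rewrite lee_fin addr_ge0 // mulr_ge0 // sqr_ge0.
  rewrite lee_fin -subr_ge0.
  have h2 := rff_sq_le2 w b a.
  set ra := rff w b a; set rx := rff w b x.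
  have -> : A + B * (ra * rx) + C * (rx * rx) - (q * (al + be * (ra * rx - k)) ^+ 2 + r)
     = q * be ^+ 2 * ((2 - ra ^+ 2) * rx ^+ 2) by rewrite /A /B /C; ring.
  apply: mulr_ge0; first by apply: mulr_ge0 => //; exact: sqr_ge0.
  by apply: mulr_ge0; [rewrite subr_ge0 | exact: sqr_ge0].
rewrite (_ : (\int[P]_w (A + C + B * cos (dotp w a - dotp w x))%:E)%E = (A + C + B * k)%:E); last exact: intP_lin.
rewrite lee_fin -subr_ge0.
have -> : q * (al ^+ 2 + 2 * be ^+ 2) + r - (A + C + B * k) = q * be ^+ 2 * k ^+ 2
  by rewrite /A /B /C; ring.
by apply: mulr_ge0; [apply: mulr_ge0 => //|]; exact: sqr_ge0.
Qed.
End S2.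

Section S3.
Variables (R : realType) (d N : nat) (P : probability (d.-tuple R) R).
Variables (xs : 'I_N -> 'rV[R]_d) (ys : 'I_N -> R)
  (dL : R -> R -> R) (K : 'rV[R]_d -> 'rV[R]_d -> R) (gamma lambda M C2 : R) (x : 'rV[R]_d).

Local Notation stp := (step xs ys dL K gamma lambda).
Local Notation rho := ((1 - gamma * lambda) ^+ 2).

Lemma Eiter_ge0 t (F : seq (sample R d N) -> \bar R) :
  (forall s, (0 <= F s)%E) -> (0 <= Eiter P t F)%E.
Proof.
elim: t F => [|t IH] F F0 //=.
apply: mule_ge0; first by rewrite lee_fin invr_ge0.
apply: sume_ge0 => i _; apply: integral_ge0 => w _.
by apply: Eunif_ge0 => b _; apply: IH.
Qed.

Lemma e_step p i w b :
  (stp p (i, (w, b))).1 x - (stp p (i, (w, b))).2 x =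
  (1 - gamma * lambda) * (p.1 x - p.2 x) +
  (- gamma * dL (p.1 (xs i)) (ys i)) * (rff w b (xs i) * rff w b x - K (xs i) x).
Proof. by case: p => f h /=; ring. Qed.

Hypothesis hM : forall u y, dL u y ^+ 2 <= M ^+ 2.
Hypothesis hk : forall a, (K a x)%:E = (\int[P]_w Eunif (fun b => (rff w b a * rff w b x)%:E))%E.
Hypothesis hr0 : 0 <= rho.
Hypothesis hr1 : rho <= 1.
Hypothesis hC : 2 * gamma ^+ 2 * M ^+ 2 <= C2 * (1 - rho).
Hypothesis hC0 : 0 <= C2.
Hypothesis hN : (0 < N)%N.

Lemma main_ind t : forall p,
  (Eiter P t (fun s => (`|(foldl stp p s).1 x - (foldl stp p s).2 x| ^+ 2)%:E)
  <= (rho ^+ t * (p.1 x - p.2 x) ^+ 2 + C2 * (1 - rho ^+ t))%:E)%E.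
Proof.
elim: t => [|t IH] p.
  by rewrite /= expr0 mul1r subrr mulr0 addr0 real_normK ?num_real.
rewrite [Eiter _ _ _]/=.
set B := rho ^+ t.+1 * (p.1 x - p.2 x) ^+ 2 + C2 * (1 - rho ^+ t.+1).
have rt0 : 0 <= rho ^+ t by rewrite exprn_ge0.
have rt1 : rho ^+ t <= 1 by rewrite exprn_ile1.
have Hi : forall i : 'I_N, (\int[P]_w Eunif (fun b => Eiter P t (fun s =>
     (`|(foldl stp (stp p (i, (w, b))) s).1 x - (foldl stp (stp p (i, (w, b))) s).2 x| ^+ 2)%:E))
     <= B%:E)%E.
  move=> i.
  set al := (1 - gamma * lambda) * (p.1 x - p.2 x).
  set be := - gamma * dL (p.1 (xs i)) (ys i).
  apply: (@le_trans _ _ (\int[P]_w Eunif (fun b => (rho ^+ t * (al + be * (rff w b (xs i) * rff w b x - K (xs i) x)) ^+ 2 + C2 * (1 - rho ^+ t))%:E))%E).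
    apply: ge0_le_int_nm => w _.
      by apply: Eunif_ge0 => b _; apply: Eiter_ge0 => s.
    apply: Eunif_le => b _; first by apply: Eiter_ge0 => s.
    by apply: le_trans (IH _) _; rewrite e_step.
  apply: le_trans (one_step _ _ _ _ (hk (xs i))) _.
  - exact: rt0.
  - by rewrite mulr_ge0 // subr_ge0.
  rewrite lee_fin -subr_ge0.
  have hg := hM (p.1 (xs i)) (ys i).
  have -> : B - (rho ^+ t * (al ^+ 2 + 2 * be ^+ 2) + C2 * (1 - rho ^+ t)) =
     rho ^+ t * ((C2 * (1 - rho) - 2 * gamma ^+ 2 * M ^+ 2) + 2 * gamma ^+ 2 * (M ^+ 2 - dL (p.1 (xs i)) (ys i) ^+ 2)).
    by rewrite /B /al /be exprS; ring.
  apply: mulr_ge0 => //; apply: addr_ge0; first by rewrite subr_ge0.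
  by apply: mulr_ge0; [apply: mulr_ge0 => //; exact: sqr_ge0 | rewrite subr_ge0].
apply: (@le_trans _ _ ((N%:R^-1)%:E * \sum_(i < N) B%:E)%E).
  apply: lee_wpmul2l; first by rewrite lee_fin invr_ge0.
  by apply: lee_sum => i _; exact: Hi.
rewrite sumEFin sumr_const card_ord -EFinM -[B *+ N]mulr_natl mulrA mulVf ?mul1r //.
by rewrite pnatr_eq0 -lt0n.
Qed.
End S3.

Unset Implicit Arguments.

Theorem lemma3 (R : realType) (d N : nat)
  (xs : 'I_N -> 'rV[R]_d) (ys : 'I_N -> R)
  (K : 'rV[R]_d -> 'rV[R]_d -> R) (P : probability (d.-tuple R) R)
  (L dL : R -> R -> R) (lambda gamma M Lc kappa phib : R) :
  (0 < N)%N ->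
  (* K: continuous, symmetric, shift-invariant, positive definite kernel *)
  continuous (fun p : 'rV[R]_d * 'rV[R]_d => K p.1 p.2) ->
  (forall x x', K x x' = K x' x) ->
  (exists k : 'rV[R]_d -> R, forall x x', K x x' = k (x - x')) ->
  (forall (n : nat) (z : 'I_n -> 'rV[R]_d) (c : 'I_n -> R),
      0 <= \sum_(i < n) \sum_(j < n) c i * c j * K (z i) (z j)) ->
  (* P is the spectral probability measure: K = E_{omega,b}[phi phi] *)
  (forall x x', (K x x')%:E =
      (\int[P]_w Eunif (fun b => (rff w b x * rff w b x')%:E))%E) ->
  0 < lambda ->
  (* L convex in its first argument, with derivative dL in that argument *)
  (forall (y u v t : R), 0 <= t <= 1 ->
      L (t * u + (1 - t) * v) y <= t * L u y + (1 - t) * L v y) ->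
  (forall u y : R, is_derive u (1 : R) (fun v : R => L v y) (dL u y)) ->
  (forall u y, `|dL u y| < M) ->
  (forall y u v, `|L u y - L v y| <= Lc * `|u - v|) ->
  (forall y u v, `|dL u y - dL v y| <= Lc * `|u - v|) ->
  (forall x x', K x x' <= kappa) ->
  (forall (w : d.-tuple R) (b : R) (x x' : 'rV[R]_d), `|rff w b x * rff w b x'| <= phib) ->
  0 < gamma < lambda^-1 ->
  forall (t : nat) (x : 'rV[R]_d),
    (Eiter P t (fun s =>
      (`|(iterates xs ys dL K gamma lambda s).1 x
         - (iterates xs ys dL K gamma lambda s).2 x| ^+ 2)%:E)
    <= (M ^+ 2 * (Num.sqrt kappa + Num.sqrt phib) ^+ 2 * gamma / lambda)%:E)%E.
Proof.
move=> hN _ _ _ _ hK hl _ _ hdL _ _ _ hphi /andP[hg0 hgl] t x.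
set S := (Num.sqrt kappa + Num.sqrt phib) ^+ 2.
set C2 := M ^+ 2 * S * gamma / lambda.
have gl1 : gamma * lambda < 1 by rewrite -ltr_pdivlMr // div1r.
have gl0 : 0 < gamma * lambda by rewrite mulr_gt0.
have phib2 : 2 <= phib.
  have := hphi [tuple (0 : R) | i < d] (- dotp [tuple (0 : R) | i < d] x) x x.
  by rewrite /rff addrN cos0 mulr1 -expr2 sqr_sqrtr // ger0_norm.
have hS : phib <= S.
  rewrite /S -subr_ge0.
  have -> : (Num.sqrt kappa + Num.sqrt phib) ^+ 2 - phib =
    Num.sqrt kappa * (Num.sqrt kappa + 2 * Num.sqrt phib).
    by rewrite -{2}(@sqr_sqrtr _ phib) ?(le_trans _ phib2) //; ring.
  by rewrite mulr_ge0 // addr_ge0 // mulr_ge0.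
have hM : forall u y, dL u y ^+ 2 <= M ^+ 2.
  move=> u y; rewrite -(real_normK (num_real (dL u y))).
  have := hdL u y; have := normr_ge0 (dL u y); nra.
have hr0 : 0 <= (1 - gamma * lambda) ^+ 2 by exact: sqr_ge0.
have hr1 : (1 - gamma * lambda) ^+ 2 <= 1 by nra.
have hC : 2 * gamma ^+ 2 * M ^+ 2 <= C2 * (1 - (1 - gamma * lambda) ^+ 2).
  have -> : C2 * (1 - (1 - gamma * lambda) ^+ 2) =
    M ^+ 2 * gamma ^+ 2 * (S * (2 - gamma * lambda)).
    by rewrite /C2; field; rewrite gt_eqF.
  have h2 : 2 <= S by exact: le_trans hS.
  have hm : 0 <= M ^+ 2 * gamma ^+ 2 by rewrite mulr_ge0 // sqr_ge0.
  have h3 : 2 <= S * (2 - gamma * lambda) by nra.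
  rewrite (_ : 2 * gamma ^+ 2 * M ^+ 2 = M ^+ 2 * gamma ^+ 2 * 2); last by ring.
  exact: ler_wpM2l.
have hC0 : 0 <= C2.
  rewrite /C2 mulr_ge0 ?invr_ge0 ?(ltW hl) // mulr_ge0 ?(ltW hg0) //.
  by rewrite mulr_ge0 ?sqr_ge0 // /S sqr_ge0.
have := @main_ind R d N P xs ys dL K gamma lambda M C2 x hM (fun a => hK a x)
  hr0 hr1 hC hC0 hN t (fun _ => 0, fun _ => 0).
rewrite /= subrr expr0n mulr0 add0r => H.
apply: (le_trans H); rewrite lee_fin.
rewrite -[X in _ <= X]mulr1; apply: ler_wpM2l => //.
by rewrite lerBlDr lerDl exprn_ge0.
Qed.
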